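(* Let $\mathcal{C}$ be a prevariety over a finite alphabet $A$. Then $\mathit{SF}(\mathcal{C}) = \mathrm{FO}(\mathbb{I}_{\mathcal{C}})$.
   Context: Fix a finite alphabet $A$. A prevariety is a class of regular languages over $A$ containing $\emptyset$ and $A^*$, closed under union, intersection, complement, and under the quotients $u^{-1}L=\{w\mid uw\in L\}$ and $Lu^{-1}=\{w\mid wu\in L\}$. $\mathit{SF}(\mathcal{C})$ is the least class containing $\mathcal{C}$ and all $\{a\}$ ($a\in A$), closed under union, complement and concatenation. A word $w=a_1\cdots a_n$ is viewed as a structure with domain $\{0,1,\dots,n+1\}$; positions $1\le i\le n$ carry label $a_i$, while $0$ and $n+1$ are unlabeled. For positions $i<j$, $w(i,j)=a_{i+1}\cdots a_{j-1}$. First-order formulas over a set $\mathbb{S}$ of predicates use first-order variables ranging over positions, two constants $\mathit{min}$ and $\mathit{max}$ interpreted as $0$ and $n+1$, atomic formulas $x=y$ and $P(x_1,\dots,x_k)$ for $P\in\mathbb{S}$ (arguments being variables or constants), and are closed under disjunction, negation and existential quantification, with the usual semantics. The label predicates are unary predicates $a(x)$ for $a\in A$, holding iff position $x$ is labeled $a$ (so never at $0$ or $n+1$). For a set $\mathbb{S}$ of predicates, $\mathrm{FO}(\mathbb{S})$ is the class of languages $\{w\mid w\models\varphi\}$ defined by first-order sentences $\varphi$ over the label predicates together with $\mathbb{S}$. $\mathbb{I}_{\mathcal{C}}$ is the set containing, for each $L\in\mathcal{C}$, a binary predicate $I_L$ with $I_L(i,j)$ holding in $w$ iff $i<j$ and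 $w(i,j)\in L$. *)

(* Defs.v *)
From mathcomp Require Import all_boot.
Set Implicit Arguments. Unset Strict Implicit. Unset Printing Implicit Defensive.

Section Languages.
Variable A : finType.

Definition lang := seq A -> Prop.

Definition regular (L : lang) : Prop :=
  exists (Q : finType) (q0 : Q) (delta : Q -> A -> Q) (F : pred Q),
    forall w, L w <-> foldl delta q0 w \in F.

Definition lang_empty : lang := fun _ => False.
Definition lang_full : lang := fun _ => True.
Definition lang_union (L1 L2 : lang) : lang := fun w => L1 w \/ L2 w.
Definition lang_inter (L1 L2 : lang) : lang := fun w => L1 w /\ L2 w.
Definition lang_compl (L : lang) : lang := fun w => ~ L w.
Definition lang_lquot (u : seq A) (L : lang) : lang := fun w => L (u ++ w).
Definition lang_rquot (L : lang) (u : seq A) : lang := fun w => L (w ++ u).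
Definition lang_concat (L1 L2 : lang) : lang :=
  fun w => exists u v, w = u ++ v /\ L1 u /\ L2 v.
Definition lang_letter (a : A) : lang := fun w => w = [:: a].

Definition prevariety (C : lang -> Prop) : Prop :=
  (forall L, C L -> regular L) /\
  C lang_empty /\ C lang_full /\
  (forall L1 L2, C L1 -> C L2 -> C (lang_union L1 L2)) /\
  (forall L1 L2, C L1 -> C L2 -> C (lang_inter L1 L2)) /\
  (forall L, C L -> C (lang_compl L)) /\
  (forall u L, C L -> C (lang_lquot u L)) /\
  (forall u L, C L -> C (lang_rquot L u)).

Inductive SF (C : lang -> Prop) : lang -> Prop :=
  | SF_base L : C L -> SF C L
  | SF_letter a : SF C (lang_letter a)
  | SF_union L1 L2 : SF C L1 -> SF C L2 -> SF C (lang_union L1 L2)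
  | SF_compl L : SF C L -> SF C (lang_compl L)
  | SF_concat L1 L2 : SF C L1 -> SF C L2 -> SF C (lang_concat L1 L2).

Inductive fterm := TVar of nat | TMin | TMax.

Inductive formula :=
  | FEq of fterm & fterm
  | FLabel of A & fterm
  | FInf of lang & fterm & fterm
  | FOr of formula & formula
  | FNot of formula
  | FEx of nat & formula.

Fixpoint uses_only (C : lang -> Prop) (phi : formula) : Prop :=
  match phi with
  | FEq _ _ | FLabel _ _ => True
  | FInf L _ _ => C L
  | FOr f g => uses_only C f /\ uses_only C g
  | FNot f => uses_only C f
  | FEx _ f => uses_only C f
  end.

Definition term_fv (t : fterm) : seq nat :=
  if t is TVar x then [:: x] else [::].

Fixpoint fv (phi : formula) : seq nat :=
  match phi with
  | FEq t1 t2 => term_fv t1 ++ term_fv t2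
  | FLabel _ t => term_fv t
  | FInf _ t1 t2 => term_fv t1 ++ term_fv t2
  | FOr f g => fv f ++ fv g
  | FNot f => fv f
  | FEx x f => filter (fun y => y != x) (fv f)
  end.

Definition sentence (phi : formula) : Prop := fv phi = [::].

(* The word w = a_1...a_n has positions 0, 1, ..., n+1. *)
Definition tval (w : seq A) (e : nat -> nat) (t : fterm) : nat :=
  match t with TVar x => e x | TMin => 0 | TMax => (size w).+1 end.

(* w(i,j) = a_{i+1} ... a_{j-1} *)
Definition infix_word (w : seq A) (i j : nat) : seq A := drop i (take j.-1 w).

Definition upd (e : nat -> nat) (x p : nat) : nat -> nat :=
  fun y => if y == x then p else e y.

Fixpoint sat (w : seq A) (e : nat -> nat) (phi : formula) : Prop :=
  match phi with
  | FEq t1 t2 => tval w e t1 = tval w e t2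
  | FLabel a t =>
      let p := tval w e t in (0 < p <= size w) /\ nth a w p.-1 = a
  | FInf L t1 t2 =>
      let i := tval w e t1 in let j := tval w e t2 in
      i < j /\ L (infix_word w i j)
  | FOr f g => sat w e f \/ sat w e g
  | FNot f => ~ sat w e f
  | FEx x f => exists p, p <= (size w).+1 /\ sat w (upd e x p) f
  end.

Definition FO_IC (C : lang -> Prop) (L : lang) : Prop :=
  exists phi, uses_only C phi /\ sentence phi /\
    forall w, L w <-> sat w (fun _ => 0) phi.

End Languages.

(* Main.v *)
From mathcomp Require Import all_boot zify.
Require Import Defs.
From Stdlib Require Import Classical FunctionalExtensionality PropExtensionality Setoid.
Set Implicit Arguments. Unset Strict Implicit. Unset Printing Implicit Defensive.

Fixpoint Ex {T} (P : T -> Prop) (s : seq T) : Prop :=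
  if s is x :: s' then P x \/ Ex P s' else False.
Fixpoint Al {T} (P : T -> Prop) (s : seq T) : Prop :=
  if s is x :: s' then P x /\ Al P s' else True.

Lemma Ex_mem (T : eqType) (P : T -> Prop) s : Ex P s <-> exists x, x \in s /\ P x.
Proof.
elim: s => [|y s IH] /=; first by split=> // [[x []]].
rewrite IH; split.
- case=> [h|[x [hx h]]]; first by exists y; rewrite mem_head.
  by exists x; rewrite in_cons hx orbT.
- case=> x []; rewrite in_cons => /orP [/eqP->|hx] h; first by left.
  by right; exists x.
Qed.

Lemma Al_mem (T : eqType) (P : T -> Prop) s : (forall x, x \in s -> P x) -> Al P s.
Proof.
elim: s => [|y s IH] //= H; split; first by apply: H; rewrite mem_head.
by apply: IH => x hx; apply: H; rewrite in_cons hx orbT.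
Qed.

Lemma Ex_and_r T (P : T -> Prop) Q s : (Ex P s /\ Q) <-> Ex (fun x => P x /\ Q) s.
Proof. elim: s => [|y s IH] /=; first by split=> [[]|]. rewrite -IH; tauto. Qed.

Lemma Ex_ex2 T U V (P : T -> U -> V -> Prop) s :
  (exists u v, Ex (P^~ u ^~ v) s) <-> Ex (fun x => exists u v, P x u v) s.
Proof.
elim: s => [|y s IH] /=; first by split=> [[u [v []]]|].
rewrite -IH; split.
- by case=> u [v [h|h]]; [left; exists u, v | right; exists u, v].
- by case=> [[u [v h]]|[u [v h]]]; exists u, v; [left|right].
Qed.

Lemma Ex_impl T (P Q : T -> Prop) s : (forall x, P x -> Q x) -> Ex P s -> Ex Q s.
Proof. move=> H; elim: s => //= y s IH; case=> h; [left; exact: H | right; exact: IH]. Qed.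

Lemma Ex_iff T (P Q : T -> Prop) s : (forall x, P x <-> Q x) -> (Ex P s <-> Ex Q s).
Proof. by move=> H; split; apply: Ex_impl => x /H. Qed.

Lemma lang_ext (A : finType) (L1 L2 : lang A) : (forall w, L1 w <-> L2 w) -> L1 = L2.
Proof.
move=> H; apply: functional_extensionality => w; apply: propositional_extensionality; exact: H.
Qed.

Lemma SF_ext (A : finType) C (L1 L2 : lang A) : (forall w, L1 w <-> L2 w) -> SF C L1 -> SF C L2.
Proof. by move=> /lang_ext ->. Qed.

Lemma SF_inter (A : finType) C (L1 L2 : lang A) : SF C L1 -> SF C L2 -> SF C (lang_inter L1 L2).
Proof.
move=> h1 h2; apply: (@SF_ext _ _ (lang_compl (lang_union (lang_compl L1) (lang_compl L2)))).
  by move=> w; rewrite /lang_compl /lang_union /lang_inter; tauto.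
by do 2 constructor; constructor.
Qed.

Section RDsec.
Variable A : finType.

Fixpoint mrect (R : seq (lang A)) (us : seq (seq A)) : Prop :=
  match R, us with
  | [::], [::] => True
  | L :: R', u :: us' => L u /\ mrect R' us'
  | _, _ => False
  end.

Definition RD (K : lang A -> Prop) (m : nat) (S : seq (seq A) -> Prop) :=
  exists Rs : seq (seq (lang A)), Al (fun R => size R = m /\ Al K R) Rs /\
    forall us, size us = m -> (S us <-> Ex (fun R => mrect R us) Rs).

Lemma RD_ext K m S S' : (forall us, size us = m -> (S us <-> S' us)) -> RD K m S -> RD K m S'.
Proof.
move=> H [Rs [h1 h2]]; exists Rs; split=> // us hu; rewrite -H //; exact: h2.
Qed.

Lemma RD_mono (K K' : lang A -> Prop) m S : (forall L, K L -> K' L) -> RD K m S -> RD K' m S.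
Proof.
move=> HK [Rs [h1 h2]]; exists Rs; split=> //.
elim: Rs h1 {h2} => //= R Rs IH [[hs hR] h]; split; last exact: IH.
split=> //; elim: R hR {hs} => //= L R IH' [] /HK ? /IH'; tauto.
Qed.

Lemma RD_false K m : RD K m (fun _ => False).
Proof. by exists [::]; split. Qed.

Lemma RD_rect K m R : size R = m -> Al K R -> RD K m (mrect R).
Proof. move=> hs hR; exists [:: R]; split=> //= us _; tauto. Qed.

Lemma mrect_full us : mrect (nseq (size us) (@lang_full A)) us.
Proof. by elim: us. Qed.

Lemma mrect_size R us : mrect R us -> size R = size us.
Proof. by elim: R us => [|L R IH] [|u us] //= [_ /IH ->]. Qed.

Lemma Al_nseq T (P : T -> Prop) n x : P x -> Al P (nseq n x).
Proof. by move=> h; elim: n. Qed.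

Lemma RD_true K m : K (@lang_full A) -> RD K m (fun _ => True).
Proof.
move=> hK; apply: (@RD_ext _ _ (mrect (nseq m (@lang_full A)))).
  by move=> us <-; split=> // _; exact: mrect_full.
apply: RD_rect; [exact: size_nseq | exact: Al_nseq].
Qed.

Lemma RD_const K m (Q : Prop) : K (@lang_full A) -> RD K m (fun _ => Q).
Proof.
move=> hK; case: (classic Q) => hQ.
  by apply: RD_ext (RD_true m hK) => us _; tauto.
by apply: RD_ext (RD_false K m) => us _; tauto.
Qed.

Lemma Ex_cat T (P : T -> Prop) s1 s2 : Ex P (s1 ++ s2) <-> Ex P s1 \/ Ex P s2.
Proof. elim: s1 => /= [|x s1 IH]; [tauto | rewrite IH; tauto]. Qed.

Lemma Al_cat T (P : T -> Prop) s1 s2 : Al P (s1 ++ s2) <-> Al P s1 /\ Al P s2.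
Proof. elim: s1 => /= [|x s1 IH]; [tauto | rewrite IH; tauto]. Qed.

Lemma RD_or K m S1 S2 : RD K m S1 -> RD K m S2 -> RD K m (fun us => S1 us \/ S2 us).
Proof.
move=> [Rs1 [a1 b1]] [Rs2 [a2 b2]]; exists (Rs1 ++ Rs2); split; first by rewrite Al_cat.
by move=> us hu; rewrite Ex_cat -b1 // -b2.
Qed.

Lemma RD_Ex T K m (S : T -> seq (seq A) -> Prop) s :
  Al (fun t => RD K m (S t)) s -> RD K m (fun us => Ex (fun t => S t us) s).
Proof.
elim: s => [|t s IH] /= h; first exact: RD_false.
case: h => h1 h2; exact: RD_or h1 (IH h2).
Qed.

Lemma RD_cons K m (P : lang A) S : K P -> RD K m S ->
  RD K m.+1 (fun us => P (head [::] us) /\ S (behead us)).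
Proof.
move=> hP [Rs [a b]]; exists (map (cons P) Rs); split.
  by elim: Rs a {b} => //= R Rs IH [[h1 h2] h3]; split; [split=> //=; rewrite h1 | exact: IH].
move=> [|u us] //= [hu]; rewrite (b _ hu).
by elim: Rs {a b} => /= [|R Rs IH]; [tauto | rewrite -IH; tauto].
Qed.

Fixpoint inter_rect (R1 R2 : seq (lang A)) :=
  match R1, R2 with
  | L1 :: R1', L2 :: R2' => lang_inter L1 L2 :: inter_rect R1' R2'
  | _, _ => [::]
  end.

Lemma mrect_inter R1 R2 us : size R1 = size R2 ->
  (mrect (inter_rect R1 R2) us <-> mrect R1 us /\ mrect R2 us).
Proof.
elim: R1 R2 us => [|L1 R1 IH] [|L2 R2] [|u us] //=; try tauto.
move=> [/IH h]; rewrite h /lang_inter; tauto.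
Qed.

End RDsec.

Lemma Al_impl T (P Q : T -> Prop) s : (forall x, P x -> Q x) -> Al P s -> Al Q s.
Proof. move=> H; elim: s => //= y s IH [/H ? /IH ?]; tauto. Qed.

Lemma Ex_and_l T (P : T -> Prop) Q s : (Q /\ Ex P s) <-> Ex (fun x => Q /\ P x) s.
Proof. elim: s => [|y s IH] /=; first by split=> [[]|]. rewrite -IH; tauto. Qed.

Lemma not_Ex T (P : T -> Prop) s : ~ Ex P s <-> Al (fun x => ~ P x) s.
Proof. elim: s => [|y s IH] /=; first by tauto. rewrite -IH; tauto. Qed.

Lemma Ex_iff_Al T (Q P P' : T -> Prop) s : Al Q s -> (forall x, Q x -> (P x <-> P' x)) ->
  (Ex P s <-> Ex P' s).
Proof.
move=> hQ H; elim: s hQ => //= y s IH [hy hs]; rewrite (H _ hy) (IH hs); tauto.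
Qed.

Lemma Al_take T (P : T -> Prop) n s : Al P s -> Al P (take n s).
Proof. by elim: s n => [|x s IH] [|n] //= [? /IH]. Qed.

Lemma Al_drop T (P : T -> Prop) n s : Al P s -> Al P (drop n s).
Proof. by elim: s n => [|x s IH] [|n] //= [? /IH]. Qed.

Lemma Al_nth T (P : T -> Prop) x0 n s : P x0 -> Al P s -> P (nth x0 s n).
Proof. by move=> h0; elim: s n => [|x s IH] [|n] //= [? /IH]. Qed.

Section RD2.
Variable A : finType.
Variable C : lang A -> Prop.
Hypothesis hfull : C (@lang_full A).

Local Notation K := (SF C).

Lemma SF_full : K (@lang_full A).
Proof. by constructor. Qed.

Lemma size_inter (R1 R2 : seq (lang A)) : size R1 = size R2 -> size (inter_rect R1 R2) = size R1.
Proof. by elim: R1 R2 => [|L1 R1 IH] [|L2 R2] //= [] /IH ->. Qed.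

Lemma Al_inter (R1 R2 : seq (lang A)) : Al K R1 -> Al K R2 -> Al K (inter_rect R1 R2).
Proof.
by elim: R1 R2 => [|L1 R1 IH] [|L2 R2] //= [? ?] [? ?]; split; [exact: SF_inter | exact: IH].
Qed.

Lemma RD_and m S1 S2 : RD K m S1 -> RD K m S2 -> RD K m (fun us => S1 us /\ S2 us).
Proof.
move=> [Rs1 [a1 b1]] h2.
apply: (@RD_ext _ _ _ (fun us => Ex (fun R1 => mrect R1 us /\ S2 us) Rs1)).
  by move=> us hu; rewrite -Ex_and_r -b1.
apply: RD_Ex; apply: Al_impl a1 => R1 [s1 k1].
case: h2 => [Rs2 [a2 b2]].
apply: (@RD_ext _ _ _ (fun us => Ex (fun R2 => mrect (inter_rect R1 R2) us) Rs2)).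
  move=> us hu; rewrite b2 // Ex_and_l; apply: (Ex_iff_Al a2) => R2 [s2 _].
  by rewrite mrect_inter // s1 s2.
apply: RD_Ex; apply: Al_impl a2 => R2 [s2 k2]; apply: RD_rect.
  by rewrite size_inter // s1 s2.
exact: Al_inter.
Qed.

Lemma RD_Al' T m (S : T -> seq (seq A) -> Prop) s :
  Al (fun t => RD K m (S t)) s -> RD K m (fun us => Al (fun t => S t us) s).
Proof.
elim: s => [|t s IH] /= h; first exact: RD_true SF_full.
case: h => h1 h2; exact: RD_and h1 (IH h2).
Qed.

Lemma RD_not_rect m R : size R = m -> Al K R -> RD K m (fun us => ~ mrect R us).
Proof.
elim: R m => [|L R IH] m /=.
  move=> <- _; apply: (RD_ext _ (RD_false K 0)) => [[|]] //=; tauto.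
move=> <- [hL hR].
apply: (@RD_ext _ _ _ (fun us => (lang_compl L (head [::] us) /\ True) \/
     (lang_full (head [::] us) /\ ~ mrect R (behead us)))).
  move=> [|u us] //= _; rewrite /lang_compl /lang_full; tauto.
apply: RD_or.
  apply: (@RD_cons _ _ _ _ (fun _ => True)); first by constructor.
  exact: RD_true SF_full.
apply: (@RD_cons _ _ _ _ (fun us => ~ mrect R us)); first exact: SF_full.
exact: IH.
Qed.

Lemma RD_not m S : RD K m S -> RD K m (fun us => ~ S us).
Proof.
move=> [Rs [a b]].
apply: (@RD_ext _ _ _ (fun us => Al (fun R => ~ mrect R us) Rs)).
  by move=> us hu; rewrite (b _ hu) not_Ex.
apply: RD_Al'; apply: Al_impl a => R [s k]; exact: RD_not_rect.
Qed.

End RD2.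

Section RD3.
Variable A : finType.

Lemma mrect_cat (R1 R2 : seq (lang A)) us1 us2 : size R1 = size us1 ->
  (mrect (R1 ++ R2) (us1 ++ us2) <-> mrect R1 us1 /\ mrect R2 us2).
Proof.
elim: R1 us1 => [|L R1 IH] [|u us1] //=; first tauto.
by move=> [] /IH ->; tauto.
Qed.

Definition pad i (R : seq (lang A)) k := nseq i (@lang_full A) ++ R ++ nseq k (@lang_full A).

Lemma mrect_pad M i k R us : size us = M -> size R = k -> i + k <= M ->
  (mrect R (drop i (take (i + k) us)) <-> mrect (pad i R (M - i - k)) us).
Proof.
move=> hu hR hk.
have E : us = take i us ++ drop i (take (i + k) us) ++ drop (i + k) us.
  by rewrite catA -{1}(take_takel us (leq_addr k i)) cat_take_drop cat_take_drop.
rewrite {2}E /pad mrect_cat; last by rewrite size_nseq size_takel // hu; lia.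
rewrite mrect_cat; last by rewrite size_drop size_takel ?hR; [lia | rewrite hu; lia].
have h1 := mrect_full (take i us); have h2 := mrect_full (drop (i + k) us).
rewrite size_takel in h1; last by rewrite hu; lia.
rewrite size_drop hu in h2; have -> : M - i - k = M - (i + k) by lia.
tauto.
Qed.

Lemma RD_lift K k M i S : K (@lang_full A) -> i + k <= M -> RD K k S ->
  RD K M (fun us => S (drop i (take (i + k) us))).
Proof.
move=> hK hk [Rs [a b]].
apply: (@RD_ext _ _ _ (fun us => Ex (fun R => mrect (pad i R (M - i - k)) us) Rs)).
  move=> us hu; rewrite b; last by rewrite size_drop size_takel; [lia | rewrite hu].
  apply: (Ex_iff_Al a) => R [hR _]; symmetry; exact: (mrect_pad hu hR hk).
apply: RD_Ex; apply: Al_impl a => R [hR kR]; apply: RD_rect.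
  rewrite /pad !size_cat !size_nseq hR; lia.
rewrite /pad Al_cat Al_cat; split; [exact: Al_nseq | split => //; exact: Al_nseq].
Qed.

Definition ins (i : nat) (us : seq (seq A)) u1 u2 := take i us ++ u1 :: u2 :: drop i.+1 us.

Definition projR i c (R : seq (lang A)) :=
  take i R ++ lang_concat (nth (@lang_full A) R i)
     (lang_concat (lang_letter c) (nth (@lang_full A) R i.+1)) :: drop i.+2 R.

Lemma mrect_proj i c R us : i < size us -> size R = (size us).+1 ->
  ((exists u1 u2, nth [::] us i = u1 ++ c :: u2 /\ mrect R (ins i us u1 u2)) <->
   mrect (projR i c R) us).
Proof.
elim: i us R => [|i IH] [|u us] R //= hi hR.
  case: R hR => [|P [|Q R0]] // [hR].
  rewrite /ins /projR !take0 !cat0s.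
  have -> : drop 1 (u :: us) = us by rewrite /= drop0.
  have -> : drop 2 [:: P, Q & R0] = R0 by rewrite /= drop0.
  rewrite /= /lang_concat /lang_letter; split.
    move=> [u1 [u2 [-> [h1 [h2 h3]]]]]; split=> //.
    by exists u1, (c :: u2); do !split => //; exists [:: c], u2.
  move=> [[x [y [-> [hx [x' [y' [-> [-> hy]]]]]]]] hr].
  by exists x, y'; do !split.
case: R hR => [|L R] // [hR].
have := IH us R hi hR; rewrite /ins /projR /= => <-; split.
  by move=> [u1 [u2 [h1 [h2 h3]]]]; split=> //; exists u1, u2.
by move=> [h1 [u1 [u2 [h2 h3]]]]; exists u1, u2.
Qed.

Variable C : lang A -> Prop.
Hypothesis hfull : C (@lang_full A).

Lemma RD_proj m i c S : i <= m -> RD (SF C) m.+2 S ->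
  RD (SF C) m.+1 (fun us => exists u1 u2, nth [::] us i = u1 ++ c :: u2 /\ S (ins i us u1 u2)).
Proof.
move=> hi [Rs [a b]].
apply: (@RD_ext _ _ _ (fun us => Ex (fun R => mrect (projR i c R) us) Rs)).
  move=> us hu; symmetry.
  have hs : forall u1 u2, size (ins i us u1 u2) = m.+2.
    by move=> u1 u2; rewrite /ins size_cat /= size_drop size_takel hu; lia.
  transitivity (exists u1 u2, Ex (fun R => nth [::] us i = u1 ++ c :: u2 /\
                                         mrect R (ins i us u1 u2)) Rs).
    split=> [[u1 [u2 [h1 h2]]]|[u1 [u2 h]]]; exists u1, u2.
      by rewrite -Ex_and_l -b ?hs.
    by rewrite b ?hs // Ex_and_l.
  rewrite (Ex_ex2 (fun R u1 u2 => nth [::] us i = u1 ++ c :: u2 /\ mrect R (ins i us u1 u2))).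
  apply: (Ex_iff_Al a) => R [hR _]; apply: mrect_proj; rewrite hu //; lia.
apply: RD_Ex; apply: Al_impl a => R [hR kR]; apply: RD_rect.
  rewrite /projR size_cat /= size_drop size_takel hR; lia.
rewrite /projR Al_cat; split; first exact: Al_take.
split; last exact: Al_drop.
by constructor; [apply: Al_nth kR; constructor | constructor; [constructor|apply: Al_nth kR; constructor]].
Qed.

End RD3.

Section Words.
Variable A : finType.

Fixpoint build (us : seq (seq A)) (bs : seq A) : seq A :=
  match us, bs with
  | u :: us', b :: bs' => u ++ b :: build us' bs'
  | u :: _, [::] => u
  | [::], _ => [::]
  end.

Definition pos (us : seq (seq A)) j := sumn (map (fun u => (size u).+1) (take j us)).
Arguments pos : simpl never.

Lemma pos0 us : pos us 0 = 0.
Proof. by rewrite /pos take0. Qed.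

Lemma pos_cons u us j : pos (u :: us) j.+1 = (size u).+1 + pos us j.
Proof. by []. Qed.

Lemma pos_S us j : j < size us -> pos us j.+1 = pos us j + (size (nth [::] us j)).+1.
Proof.
elim: us j => [|u us IH] [|j] //= hj.
  by rewrite pos_cons !pos0 addn0 add0n.
by rewrite !pos_cons (IH j) ?addnA.

Qed.

Lemma pos_lt us i j : i < j -> j <= size us -> pos us i < pos us j.
Proof.
elim: j => [|j IH] // hij hj.
rewrite pos_S; last by lia.
case: (ltngtP i j) => h; [have := IH h (ltnW hj); lia | lia | rewrite h; lia].
Qed.

Lemma pos_ge us j : j <= size us -> j <= pos us j.
Proof.
elim: j => [|j IH] // hj; rewrite pos_S; last by lia.
have := IH (ltnW hj); lia.
Qed.

Lemma pos_over us j : size us <= j -> pos us j = pos us (size us).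
Proof. by move=> h; rewrite /pos take_oversize // take_size. Qed.

Lemma pos_size us bs : size us = (size bs).+1 -> pos us (size us) = (size (build us bs)).+1.
Proof.
elim: us bs => [|u us IH] [|b bs] //=.
  by case: us {IH} => //= _; rewrite pos_cons pos0 addn0.
move=> [/IH h]; rewrite pos_cons h size_cat /=; lia.
Qed.

Lemma take_build us bs j : size us = (size bs).+1 -> 0 < j -> j <= size us ->
  take (pos us j).-1 (build us bs) = build (take j us) (take j.-1 bs).
Proof.
elim: us bs j => [|u us IH] bs [|j] // hs _ hj.
rewrite pos_cons; rewrite /= in hs hj.
case: bs hs => [|b bs] hs.
  case: us {IH} hs hj => // _ hj; case: j hj => [_|//].
  by rewrite pos0 addn0 take_size.
case: hs => hs.
have -> : ((size u).+1 + pos us j).-1 = size u + pos us j by lia.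
rewrite take_cat ltnNge leq_addr /= addKn.
case: j hj => [|j] hj; first by rewrite pos0 take0 cats0.
have hp := pos_ge (us := us) (j := j.+1); have hp' := hp hj.
have -> : pos us j.+1 = (pos us j.+1).-1.+1 by lia.
by rewrite /= (IH bs j.+1 hs) //; lia.
Qed.

Lemma drop_build us bs i : size us = (size bs).+1 -> i < size us ->
  drop (pos us i) (build us bs) = build (drop i us) (drop i bs).
Proof.
elim: i us bs => [|i IH] us bs hs hi; first by rewrite pos0 !drop0.
case: us hs hi => [|u us] //= hs hi.
case: bs hs => [|b bs] /= hs; first by case: us hs hi.
rewrite pos_cons drop_cat ltnNge; have -> : size u <= (size u).+1 + pos us i by lia.
rewrite /=; have -> : (size u).+1 + pos us i - size u = (pos us i).+1 by lia.
by rewrite /= IH //; case: hs.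
Qed.

Lemma nth_build a us bs j : size us = (size bs).+1 -> 0 < j -> j <= size bs ->
  nth a (build us bs) (pos us j).-1 = nth a bs j.-1.
Proof.
elim: us bs j => [|u us IH] [|b bs] [|j] // hs _ hj.
rewrite pos_cons /=; rewrite /= in hs hj.
rewrite nth_cat ltnNge leq_addr /= addKn.
case: j hj => [|j] hj; first by rewrite pos0.
case: hs => hs.
have hp' : j < pos us j.+1 by apply: pos_ge; lia.
have -> : pos us j.+1 = (pos us j.+1).-1.+1 by lia.
by rewrite /= (IH bs j.+1 hs).
Qed.

End Words.

Arguments pos : simpl never.
Arguments ins : simpl never.

Section Ins.
Variable A : finType.

Lemma ins0 (u : seq A) us (u1 u2 : seq A) : ins 0 (u :: us) u1 u2 = u1 :: u2 :: us.
Proof. by rewrite /ins take0 /= drop0. Qed.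

Lemma ins_cons i (u : seq A) us (u1 u2 : seq A) : ins i.+1 (u :: us) u1 u2 = u :: ins i us u1 u2.
Proof. by []. Qed.

Lemma size_ins i (us : seq (seq A)) (u1 u2 : seq A) : i < size us -> size (ins i us u1 u2) = (size us).+1.
Proof. by move=> h; rewrite /ins size_cat /= size_drop size_takel; lia. Qed.

Lemma build_ins i (us : seq (seq A)) bs (u1 : seq A) c u2 : size us = (size bs).+1 -> i < size us ->
  nth [::] us i = u1 ++ c :: u2 ->
  build (ins i us u1 u2) (take i bs ++ c :: drop i bs) = build us bs.
Proof.
elim: i us bs => [|i IH] [|u us] bs // hs hi hu; rewrite /= in hs hi hu.
  rewrite ins0 take0 drop0 /= hu; case: bs hs => [|b bs] /=.
    by case: us {hi} => //.
  by rewrite -catA.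
case: bs hs => [|b bs] hs; rewrite /= in hs; first by case: us hs hi hu.
by rewrite ins_cons /= IH //; case: hs.
Qed.

Definition shift i j := if j <= i then j else j.+1.

Lemma pos_ins_new i (us : seq (seq A)) (u1 : seq A) c u2 : i < size us -> nth [::] us i = u1 ++ c :: u2 ->
  pos (ins i us u1 u2) i.+1 = pos us i + (size u1).+1.
Proof.
elim: i us => [|i IH] [|u us] // hi hu; rewrite /= in hi hu.
  by rewrite ins0 pos_cons !pos0 addn0.
by rewrite ins_cons !pos_cons IH // addnA.
Qed.

Lemma pos_ins_shift i (us : seq (seq A)) (u1 : seq A) c u2 j : i < size us -> nth [::] us i = u1 ++ c :: u2 ->
  pos (ins i us u1 u2) (shift i j) = pos us j.
Proof.
rewrite /shift; elim: i us j => [|i IH] [|u us] [|j] // hi hu; rewrite /= in hi hu.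
- rewrite ltn0 ins0 !pos_cons hu size_cat /=; lia.
- have := IH us j hi hu; rewrite ltnS; case: ifP => _ h.
    by rewrite ins_cons !pos_cons h.
  by rewrite ins_cons !pos_cons h.
Qed.

Lemma decompose (us : seq (seq A)) p : p <= pos us (size us) ->
  (exists j, j <= size us /\ p = pos us j) \/
  (exists i u1 c u2, i < size us /\ nth [::] us i = u1 ++ c :: u2 /\ p = pos us i + (size u1).+1).
Proof.
elim: us p => [|u us IH] p.
  by rewrite pos0 leqn0 => /eqP ->; left; exists 0; rewrite pos0.
rewrite /= pos_cons => hp.
case: (posnP p) => [->|p0]; first by left; exists 0; rewrite pos0.
case: (leqP p (size u)) => hpu.
  right; case E: (drop p.-1 u) => [|c u2].
    by have := size_drop p.-1 u; rewrite E /=; lia.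
  exists 0, (take p.-1 u), c, u2; split=> //; split.
    by rewrite /= -E cat_take_drop.
  by rewrite pos0 size_takel; lia.
have /IH [[j [hj e]]|[i [u1 [c [u2 [hi [hn e]]]]]]] : p - (size u).+1 <= pos us (size us) by lia.
  left; exists j.+1; split=> //; rewrite pos_cons; lia.
right; exists i.+1, u1, c, u2; split=> //; split=> //; rewrite pos_cons; lia.
Qed.

End Ins.

Arguments pos : simpl never.
Arguments ins : simpl never.

Lemma Ex_map T U (f : T -> U) P s : Ex P (map f s) <-> Ex (fun x => P (f x)) s.
Proof. by elim: s => //= x s ->. Qed.

Lemma Al_map T U (f : T -> U) P s : Al P (map f s) <-> Al (fun x => P (f x)) s.
Proof. by elim: s => //= x s ->. Qed.

Lemma Al_all T (P : T -> Prop) s : (forall x, P x) -> Al P s.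
Proof. by move=> h; elim: s. Qed.

Lemma Ex_Al T (P Q : T -> Prop) s : Ex P s -> Al Q s -> exists x, P x /\ Q x.
Proof. elim: s => //= x s IH [h|h] [h1 h2]; [by exists x | exact: IH]. Qed.

Lemma Ex_ex T (P : T -> Prop) s : Ex P s -> exists x, P x.
Proof. by elim: s => //= x s IH [h|/IH//]; exists x. Qed.

Lemma finite_reps (A : finType) (Q : finType) (f : seq A -> Q) :
  exists us : seq (seq A), forall x, Ex (fun u => f u = f x) us.
Proof.
suff H : forall S : seq Q, exists us : seq (seq A), forall x, f x \in S -> Ex (fun u => f u = f x) us.
  by have [us h] := H (enum Q); exists us => x; apply: h; rewrite mem_enum.
elim=> [|q S [us IH]]; first by exists [::].
case: (classic (exists x, f x = q)) => [[x0 hx0]|hn].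
  exists (x0 :: us) => x; rewrite in_cons => /orP [/eqP ->|hx] /=; [by left | right; exact: IH].
exists us => x; rewrite in_cons => /orP [/eqP hx|hx]; [by case: hn; exists x | exact: IH].
Qed.

Section Split.
Variable A : finType.
Variable C : lang A -> Prop.
Hypothesis hC : prevariety C.

Lemma C_ext (L1 L2 : lang A) : (forall w, L1 w <-> L2 w) -> C L1 -> C L2.
Proof. by move=> /lang_ext ->. Qed.

Lemma split_lang L : C L -> exists ps : seq (lang A * lang A),
  Al (fun pv => C pv.1 /\ C pv.2) ps /\
  forall x y, L (x ++ y) <-> Ex (fun pv => pv.1 x /\ pv.2 y) ps.
Proof.
case: hC => [hreg [hemp [hfull [hU [hI [hCo [hLq hRq]]]]]]] hL.
have [Q [q0 [delta [F hLr]]]] := hreg L hL.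
pose fL x := foldl delta q0 x.
pose fR y := [ffun q => foldl delta q y \in F].
have key : forall x y, L (x ++ y) <-> fR y (fL x).
  by move=> x y; rewrite hLr foldl_cat ffunE.
have [usL hsL] := finite_reps fL.
have [usR hsR] := finite_reps fR.
have CP : forall u (s : seq (seq A)), C (fun x => Al (fun v => L (x ++ v) <-> L (u ++ v)) s).
  move=> u; elim=> [|v s IH] /=.
    by apply: C_ext hfull.
  apply: (@C_ext (lang_inter (fun x => L (x ++ v) <-> L (u ++ v)) (fun x => Al (fun v => L (x ++ v) <-> L (u ++ v)) s))) => //.
  apply: hI => //.
  case: (classic (L (u ++ v))) => h.
    by apply: (C_ext _ (hRq v L hL)) => w; rewrite /lang_rquot; tauto.
  by apply: (C_ext _ (hCo _ (hRq v L hL))) => w; rewrite /lang_compl /lang_rquot; tauto.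
pose P u := fun x => Al (fun v => L (x ++ v) <-> L (u ++ v)) usR.
exists (map (fun u => (P u, lang_lquot u L)) usL); split.
  by rewrite Al_map; apply: Al_all => u /=; split; [exact: CP | exact: hLq].
move=> x y; rewrite Ex_map /=; split.
  move=> hxy; have := hsL x; apply: Ex_impl => u hu; split.
    apply: Al_all => v; rewrite !key hu //.
  by rewrite /lang_lquot key hu -key.
move=> /Ex_ex [u [hP hy]].
have [v [hv hv']] := Ex_Al (hsR y) hP.
rewrite /lang_lquot in hy.
rewrite key -hv -key hv' key hv -key //.
Qed.

Lemma C_build cs L : C L -> RD C (size cs).+1 (fun vs => L (build vs cs)).
Proof.
elim: cs L => [|c cs IH] L hL.
  apply: (@RD_ext _ _ _ (mrect [:: L])); last by apply: RD_rect.
  by move=> [|v [|]] //= _; tauto.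
have [ps [hps hs]] := split_lang hL.
apply: (@RD_ext _ _ _ (fun vs => Ex (fun pv => pv.1 (head [::] vs) /\
     lang_lquot [:: c] pv.2 (build (behead vs) cs)) ps)).
  move=> [|v vs] //= _; rewrite hs; tauto.
apply: RD_Ex; apply: Al_impl hps => pv [h1 h2].
apply: (@RD_cons _ _ _ _ (fun vs => lang_lquot [:: c] pv.2 (build vs cs))) => //.
apply: IH; case: hC => [_ [_ [_ [_ [_ [_ [hLq _]]]]]]]; exact: hLq.
Qed.

End Split.

Arguments pos : simpl never.
Arguments ins : simpl never.

Section Main.
Variable A : finType.
Variable C : lang A -> Prop.
Hypothesis hC : prevariety C.

Lemma hfull : C (@lang_full A).
Proof. by case: hC => [_ [_ [h _]]]. Qed.

Definition env (us : seq (seq A)) (f : nat -> nat) : nat -> nat := fun y => pos us (f y).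

Definition tidx m (f : nat -> nat) (t : fterm) :=
  match t with TVar x => minn (f x) m.+1 | TMin => 0 | TMax => m.+1 end.

Lemma tidx_le m f t : tidx m f t <= m.+1.
Proof. by case: t => //= x; rewrite geq_minr. Qed.

Lemma tval_idx us bs f t : size us = (size bs).+1 ->
  tval (build us bs) (env us f) t = pos us (tidx (size bs) f t).
Proof.
move=> hs; case: t => [x||] /=.
- rewrite /env -hs; case: (leqP (size us) (f x)) => h.
    exact: pos_over.
  reflexivity.
- by rewrite pos0.
- by rewrite -hs (pos_size hs).
Qed.

Lemma pos_ltE (us : seq (seq A)) i j : i <= size us -> j <= size us ->
  (pos us i < pos us j) = (i < j).
Proof.
move=> hi hj; case: (ltngtP i j) => h.
- exact: pos_lt.
- by have := pos_lt h hi; lia.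
- by rewrite h ltnn.
Qed.

Lemma pos_eqE (us : seq (seq A)) i j : i <= size us -> j <= size us ->
  (pos us i = pos us j) <-> (i = j).
Proof.
move=> hi hj; split=> [e|->] //.
case: (ltngtP i j) => h //.
- by have := pos_lt h hj; lia.
- by have := pos_lt h hi; lia.
Qed.

Lemma infix_build (us : seq (seq A)) bs i j : size us = (size bs).+1 -> i < j -> j <= size us ->
  infix_word (build us bs) (pos us i) (pos us j) = build (drop i (take j us)) (drop i (take j.-1 bs)).
Proof.
move=> hs hij hj; rewrite /infix_word take_build //; last by lia.
have -> : pos us i = pos (take j us) i by rewrite /pos take_takel // ltnW.
apply: drop_build.
  rewrite !size_takel //; lia.
rewrite size_takel //.
Qed.

Lemma env_upd us f x j : env us (upd f x j) = upd (env us f) x (pos us j).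
Proof. by apply: functional_extensionality => y; rewrite /env /upd; case: (y == x). Qed.

Definition fnew (f : nat -> nat) x i := fun y => if y == x then i.+1 else shift i (f y).

Lemma env_new us f x i u1 c u2 : i < size us -> nth [::] us i = u1 ++ c :: u2 ->
  env (ins i us u1 u2) (fnew f x i) = upd (env us f) x (pos us i + (size u1).+1).
Proof.
move=> hi hn; apply: functional_extensionality => y; rewrite /env /upd /fnew.
case: (y == x); first exact: pos_ins_new hn.
exact: pos_ins_shift hn.
Qed.

End Main.

Arguments pos : simpl never.
Arguments ins : simpl never.

Section Main2.
Variable A : finType.
Variable C : lang A -> Prop.
Hypothesis hC : prevariety C.

Lemma pos_leq (us : seq (seq A)) i j : i <= j -> j <= size us -> pos us i <= pos us j.
Proof.
move=> hij hj; case: (ltngtP i j) => h; [exact/ltnW/pos_lt | lia | by rewrite h].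
Qed.

Lemma main (phi : formula A) : uses_only C phi -> forall m f bs, size bs = m ->
  RD (SF C) m.+1 (fun us => sat (build us bs) (env us f) phi).
Proof.
have hf := hfull hC.
elim: phi => [t1 t2|a t|L t1 t2|g IHg h IHh|g IHg|x g IHg] /= hu m f bs hbs.
- apply: (@RD_ext _ _ _ (fun _ => tidx m f t1 = tidx m f t2)); last by apply: RD_const; constructor.
  move=> us hs; have hs' : size us = (size bs).+1 by rewrite hs hbs.
  rewrite !(tval_idx _ _ hs') hbs pos_eqE // hs; exact: tidx_le.
- apply: (@RD_ext _ _ _ (fun _ => (0 < tidx m f t <= m) /\ nth a bs (tidx m f t).-1 = a)); last first.
    by apply: RD_const; constructor.
  move=> us hs; have hs' : size us = (size bs).+1 by rewrite hs hbs.
  rewrite (tval_idx _ _ hs') hbs.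
  have hj := tidx_le m f t; move: hj; set j := tidx m f t => hj.
  have hw := pos_size hs'; rewrite hs in hw.
  have e1 : (0 < pos us j) = (0 < j).
    case: j hj => [|j] hj; first by rewrite pos0.
    have := @pos_ge _ us j.+1; rewrite hs => /(_ hj); lia.
  have e2 : (pos us j <= size (build us bs)) = (j <= m).
    have := @pos_ltE _ us j m.+1; rewrite hs => /(_ hj (leqnn _)); by rewrite hw !ltnS.
  rewrite e1 e2; split=> [[/andP [h0 h1] hn]|[/andP [h0 h1] hn]]; split=> //; try exact/andP.
    by rewrite (nth_build a hs') // hbs.
  by rewrite -(nth_build a hs') // hbs.
- have hi := tidx_le m f t1; have hj := tidx_le m f t2.
  move: hi hj; set i := tidx m f t1; set j := tidx m f t2 => hi hj.
  case: (ltnP i j) => hij; last first.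
    apply: (@RD_ext _ _ _ (fun _ => False)); last exact: RD_false.
    move=> us hs; have hs' : size us = (size bs).+1 by rewrite hs hbs.
    rewrite !(tval_idx _ _ hs') hbs -/i -/j pos_ltE ?hs //; split=> //; case; lia.
  pose cs := drop i (take j.-1 bs).
  have hcs : (size cs).+1 = j - i by rewrite /cs size_drop size_takel; lia.
  apply: (@RD_ext _ _ _ (fun us => L (build (drop i (take (i + (j - i)) us)) cs))).
    move=> us hs; have hs' : size us = (size bs).+1 by rewrite hs hbs.
    rewrite !(tval_idx _ _ hs') hbs -/i -/j pos_ltE ?hs // hij (infix_build hs') ?hs //.
    have -> : i + (j - i) = j by lia.
    by split=> // [[]].
  apply: (@RD_lift _ (SF C) (j - i) m.+1 i (fun vs => L (build vs cs))); [by constructor | lia |].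
  rewrite -hcs; apply: (RD_mono (K := C)); first by move=> L' hL'; constructor.
  exact: C_build.
- exact: RD_or (IHg hu.1 m f bs hbs) (IHh hu.2 m f bs hbs).
- exact: RD_not (IHg hu m f bs hbs).
- apply: (@RD_ext _ _ _ (fun us =>
     Ex (fun j => sat (build us bs) (env us (upd f x j)) g) (iota 0 m.+2) \/
     Ex (fun i => Ex (fun c => exists u1 u2, nth [::] us i = u1 ++ c :: u2 /\
        sat (build (ins i us u1 u2) (take i bs ++ c :: drop i bs))
            (env (ins i us u1 u2) (fnew f x i)) g) (enum A)) (iota 0 m.+1))).
    move=> us hs; have hs' : size us = (size bs).+1 by rewrite hs hbs.
    have hw := pos_size hs'.
    split.
      case=> [/Ex_mem [j [hjm hsat]] | /Ex_mem [i [him /Ex_mem [c [_ [u1 [u2 [hn hsat]]]]]]]].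
        rewrite mem_iota in hjm; exists (pos us j); split.
          by rewrite -hw; apply: pos_leq; lia.
        by rewrite -env_upd.
      rewrite mem_iota in him; have hi : i < size us by lia.
      exists (pos us i + (size u1).+1); split.
        rewrite -hw; apply: (@leq_trans (pos us i.+1)); last by apply: pos_leq; lia.
        by rewrite pos_S // hn size_cat /=; lia.
      by rewrite -(env_new f x hi hn) -(build_ins hs' hi hn).
    case=> p [hp hsat]; rewrite -hw in hp.
    case: (decompose hp) => [[j [hj ep]] | [i [u1 [c [u2 [hi [hn ep]]]]]]].
      left; apply/Ex_mem; exists j; split; first by rewrite mem_iota; lia.
      by rewrite env_upd -ep.
    right; apply/Ex_mem; exists i; split; first by rewrite mem_iota; lia.
    apply/Ex_mem; exists c; split; first exact: mem_enum.
    exists u1, u2; split=> //.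
    by rewrite (build_ins hs' hi hn) (env_new f x hi hn) -ep.
  apply: RD_or.
    by apply: RD_Ex; apply: Al_mem => j _; exact: IHg.
  apply: RD_Ex; apply: Al_mem => i; rewrite mem_iota => hi.
  apply: RD_Ex; apply: Al_mem => c _.
  apply: (@RD_proj _ _ hf m i c (fun vs => sat (build vs (take i bs ++ c :: drop i bs))
                                          (env vs (fnew f x i)) g)); first by lia.
  apply: IHg => //; rewrite size_cat /= size_drop size_takel; lia.
Qed.

End Main2.

Section Infix.
Variable A : finType.
Implicit Type w : seq A.

Lemma infix_size w i j : i < j -> j <= (size w).+1 -> size (infix_word w i j) = j.-1 - i.
Proof. by move=> hij hj; rewrite /infix_word size_drop size_takel //; lia. Qed.

Lemma infix_nth x w i j r : r < j.-1 - i -> nth x (infix_word w i j) r = nth x w (i + r).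
Proof. by move=> hr; rewrite /infix_word nth_drop nth_take //; lia. Qed.

Lemma drop_cat_le T n (s1 s2 : seq T) : n <= size s1 -> drop n (s1 ++ s2) = drop n s1 ++ s2.
Proof. elim: s1 n => [|x s1 IH] [|n] h //=; [by rewrite drop0 | by rewrite IH]. Qed.

Lemma infix_split w i z j : i < z -> z <= j -> j <= (size w).+1 ->
  infix_word w i z ++ infix_word w z.-1 j = infix_word w i j.
Proof.
move=> hiz hzj hj; rewrite /infix_word.
have hz : z.-1 <= j.-1 by lia.
rewrite -(take_takel w hz) -drop_cat_le; first by rewrite cat_take_drop.
rewrite size_takel ?size_takel //; lia.
Qed.

Definition tok k (t : fterm) := if t is TVar x then x < k else true.

Lemma tval_upd w e k x p t : tok k t -> k <= x -> tval w (upd e x p) t = tval w e t.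
Proof.
case: t => //= y hy hx; rewrite /upd; case: eqP => // ?; lia.
Qed.

Lemma upd_eq e x p : upd e x p x = p.
Proof. by rewrite /upd eqxx. Qed.

Lemma upd_neq e x y p : y != x -> upd e x p y = e y.
Proof. by rewrite /upd => /negbTE ->. Qed.

Lemma nnand (P Q : Prop) : ~ (~ P \/ ~ Q) <-> P /\ Q.
Proof. split; [move=> h; split; apply: NNPP => ?; apply: h; tauto | tauto]. Qed.

End Infix.

Section Formulas.
Variable A : finType.
Implicit Type w : seq A.

Definition FAnd (f g : formula A) := FNot (FOr (FNot f) (FNot g)).
Definition FLt t1 t2 : formula A := FInf (@lang_full A) t1 t2.

Lemma sat_and w e f g : sat w e (FAnd f g) <-> sat w e f /\ sat w e g.
Proof. exact: nnand. Qed.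
Lemma sat_lt w e t1 t2 : sat w e (FLt t1 t2) <-> tval w e t1 < tval w e t2.
Proof. by rewrite /=; split=> [[]|]. Qed.
Lemma sat_ex w e x f : sat w e (FEx x f) = exists p, p <= (size w).+1 /\ sat w (upd e x p) f.
Proof. by []. Qed.
Lemma sat_not w e f : sat w e (FNot f) = ~ sat w e f.
Proof. by []. Qed.
Lemma sat_or w e f g : sat w e (FOr f g) = (sat w e f \/ sat w e g).
Proof. by []. Qed.
Lemma sat_eq w e t1 t2 : sat w e (FEq A t1 t2) = (tval w e t1 = tval w e t2).
Proof. by []. Qed.
Lemma sat_label w e a t : sat w e (FLabel a t) =
  ((0 < tval w e t <= size w) /\ nth a w (tval w e t).-1 = a).
Proof. by []. Qed.
Lemma tval_var w e x : tval w e (TVar x) = e x.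
Proof. by []. Qed.

Definition LetF a k t1 t2 : formula A :=
  FEx k (FAnd (FAnd (FLt t1 (TVar k)) (FLt (TVar k) t2))
              (FAnd (FLabel a (TVar k))
                    (FNot (FEx k.+1 (FAnd (FAnd (FLt t1 (TVar k.+1)) (FLt (TVar k.+1) t2))
                                          (FNot (FEq A (TVar k.+1) (TVar k)))))))).

Lemma sat_LetF w e a k t1 t2 : tok k t1 -> tok k t2 ->
  tval w e t1 < tval w e t2 -> tval w e t2 <= (size w).+1 ->
  (sat w e (LetF a k t1 t2) <-> infix_word w (tval w e t1) (tval w e t2) = [:: a]).
Proof.
move=> h1 h2; set i := tval w e t1; set j := tval w e t2 => hij hj.
have E1 : forall p, tval w (upd e k p) t1 = i by move=> p; exact: (@tval_upd A w e k k p t1 h1 (leqnn k)).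
have E2 : forall p, tval w (upd e k p) t2 = j by move=> p; exact: (@tval_upd A w e k k p t2 h2 (leqnn k)).
have E1' : forall p q, tval w (upd (upd e k p) k.+1 q) t1 = i.
  by move=> p q; rewrite (@tval_upd A w (upd e k p) k k.+1 q t1 h1 (leqnSn k)).
have E2' : forall p q, tval w (upd (upd e k p) k.+1 q) t2 = j.
  by move=> p q; rewrite (@tval_upd A w (upd e k p) k k.+1 q t2 h2 (leqnSn k)).
have V1 : forall p q, tval w (upd (upd e k p) k.+1 q) (TVar k.+1) = q.
  by move=> p q; rewrite tval_var upd_eq.
have V0 : forall p q, tval w (upd (upd e k p) k.+1 q) (TVar k) = p.
  by move=> p q; rewrite tval_var upd_neq ?upd_eq //; lia.
have V : forall p, tval w (upd e k p) (TVar k) = p by move=> p; rewrite tval_var upd_eq.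
rewrite /LetF sat_ex; split.
  case=> p [hp]; rewrite !sat_and !sat_lt E1 E2 V sat_label V sat_not sat_ex.
  move=> [[hip hpj] [[hp0 hpa] hN]].
  have hq : forall q, q <= (size w).+1 -> i < q -> q < j -> q = p.
    move=> q hq hiq hqj; apply: NNPP => hne; apply: hN; exists q; split=> //.
    by rewrite !sat_and !sat_lt E1' E2' V1 sat_not sat_eq V1 V0.
  have ep : p = i.+1 by symmetry; apply: hq; lia.
  have ej : j = i.+2.
    case: (ltngtP j i.+2) => h //; first by lia.
    by have := hq i.+2; lia.
  have hs : size (infix_word w i j) = 1 by rewrite (infix_size hij hj) ej; lia.
  have hn : nth a (infix_word w i j) 0 = nth a w i by rewrite infix_nth ?addn0 // ej; lia.
  case E: (infix_word w i j) hs hn => [|x [|]] //= _ ->.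
  by rewrite ep /= in hpa; rewrite hpa.
move=> hinf.
have hs := infix_size hij hj; rewrite hinf /= in hs.
have hn := @infix_nth _ a w i j 0; rewrite hinf -hs /= addn0 in hn.
exists i.+1; split; first by lia.
rewrite !sat_and !sat_lt E1 E2 V sat_label V sat_not sat_ex; split; first by lia.
split; first by split; [lia | rewrite -hn //].
case=> q [hq]; rewrite !sat_and !sat_lt E1' E2' V1 sat_not sat_eq V1 V0.
move=> [[hiq hqj] hne]; apply: hne; lia.
Qed.

Definition ConcF (F1 F2 : nat -> fterm -> fterm -> formula A) k t1 t2 : formula A :=
  FEx k (FEx k.+1 (FAnd
    (FAnd (FAnd (FLt t1 (TVar k)) (FOr (FEq A (TVar k) t2) (FLt (TVar k) t2)))
          (FAnd (FLt (TVar k.+1) (TVar k))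
                (FNot (FEx k.+2 (FAnd (FLt (TVar k.+1) (TVar k.+2)) (FLt (TVar k.+2) (TVar k)))))))
    (FAnd (F1 k.+2 t1 (TVar k)) (F2 k.+2 (TVar k.+1) t2)))).

Definition sem (L : lang A) (F : nat -> fterm -> fterm -> formula A) :=
  forall k t1 t2 w e, tok k t1 -> tok k t2 -> tval w e t1 < tval w e t2 ->
    tval w e t2 <= (size w).+1 ->
    (sat w e (F k t1 t2) <-> L (infix_word w (tval w e t1) (tval w e t2))).

Lemma tok_mono k k' t : tok k t -> k <= k' -> tok k' t.
Proof. by case: t => //= y; lia. Qed.

Lemma sat_ConcF w e F1 F2 L1 L2 k t1 t2 : sem L1 F1 -> sem L2 F2 -> tok k t1 -> tok k t2 ->
  tval w e t1 < tval w e t2 -> tval w e t2 <= (size w).+1 ->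
  (sat w e (ConcF F1 F2 k t1 t2) <-> lang_concat L1 L2 (infix_word w (tval w e t1) (tval w e t2))).
Proof.
move=> S1 S2 h1 h2; set i := tval w e t1; set j := tval w e t2 => hij hj.
pose e2 p q := upd (upd e k p) k.+1 q.
have E1 : forall p q, tval w (e2 p q) t1 = i.
  by move=> p q; rewrite /e2 (@tval_upd A w (upd e k p) k k.+1 q t1 h1 (leqnSn k))
    (@tval_upd A w e k k p t1 h1 (leqnn k)).
have E2 : forall p q, tval w (e2 p q) t2 = j.
  by move=> p q; rewrite /e2 (@tval_upd A w (upd e k p) k k.+1 q t2 h2 (leqnSn k))
    (@tval_upd A w e k k p t2 h2 (leqnn k)).
have V1 : forall p q, tval w (e2 p q) (TVar k.+1) = q by move=> p q; rewrite tval_var /e2 upd_eq.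
have V0 : forall p q, tval w (e2 p q) (TVar k) = p.
  by move=> p q; rewrite tval_var /e2 upd_neq ?upd_eq //; lia.
have W0 : forall p q r, tval w (upd (e2 p q) k.+2 r) (TVar k) = p.
  by move=> p q r; rewrite tval_var upd_neq; [exact: V0 | lia].
have W1 : forall p q r, tval w (upd (e2 p q) k.+2 r) (TVar k.+1) = q.
  by move=> p q r; rewrite tval_var upd_neq; [exact: V1 | lia].
have W2 : forall p q r, tval w (upd (e2 p q) k.+2 r) (TVar k.+2) = r.
  by move=> p q r; rewrite tval_var upd_eq.
have I1 : forall p q, i < p -> p <= (size w).+1 ->
    (sat w (e2 p q) (F1 k.+2 t1 (TVar k)) <-> L1 (infix_word w i p)).
  move=> p q hip hp; have := S1 k.+2 t1 (TVar k) w (e2 p q).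
  rewrite E1 V0; apply=> //; first (by apply: (tok_mono h1); lia); rewrite /=; lia.
have I2 : forall p q, q < j ->
    (sat w (e2 p q) (F2 k.+2 (TVar k.+1) t2) <-> L2 (infix_word w q j)).
  move=> p q hqj; have := S2 k.+2 (TVar k.+1) t2 w (e2 p q).
  rewrite E2 V1; apply=> //; try (by apply: (tok_mono h2); lia); rewrite /=; lia.
rewrite /ConcF sat_ex; split.
  case=> p [hp]; rewrite sat_ex => [[q [hq]]].
  rewrite -/(e2 p q) !sat_and !sat_lt sat_or sat_eq sat_lt sat_not sat_ex E1 E2 V0 V1.
  move=> [[[hip hpj] [hqp hN]] [s1 s2]].
  have hpj' : p <= j by case: hpj => [->|/ltnW].
  have eq : q = p.-1.
    case: (ltngtP q.+1 p) => h; last by lia.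
      exfalso; apply: hN; exists q.+1; split; first by lia.
      by rewrite !sat_and !sat_lt W0 W1 W2.
    lia.
  rewrite I1 // in s1; rewrite I2 in s2; last by lia.
  exists (infix_word w i p), (infix_word w q j); split=> //.
  by rewrite eq infix_split.
case=> [u [v [huv [hu hv]]]].
have hs := infix_size hij hj; rewrite huv size_cat in hs.
pose p := i + (size u).+1; pose q := i + size u.
have hpj : p <= j by rewrite /p; lia.
have hip : i < p by rewrite /p; lia.
have hsp := infix_size hip (leq_trans hpj hj).
have hsplit := infix_split hip hpj hj.
rewrite huv in hsplit.
have /eqP := hsplit; rewrite eqseq_cat; last by rewrite hsp /p addnS /= addKn.
case/andP => /eqP hu' /eqP hv'.
exists p; split; first by rewrite /p; lia.
rewrite sat_ex; exists q; split; first by rewrite /q; lia.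
rewrite -/(e2 p q) !sat_and !sat_lt sat_or sat_eq sat_lt sat_not sat_ex E1 E2 V0 V1.
split; first split.
- split=> //; case: (ltngtP p j) => h; [by right | lia | by left].
- split; first by rewrite /p /q; lia.
  case=> r [hr]; rewrite !sat_and !sat_lt W0 W1 W2 /p /q; lia.
- rewrite I1 ?hu' //; last by lia.
  have -> : q = p.-1 by rewrite /p /q; lia.
  rewrite I2 ?hv' //; lia.
Qed.

End Formulas.

Lemma all_filter_lt k s : all (fun y => y < k.+1) s -> all (fun y => y < k) (filter (fun y => y != k) s).
Proof. rewrite all_filter; apply: sub_all => y /=; case: eqP => //= ?; lia. Qed.

Lemma tok_fv_le k k' t : tok k t -> k <= k' -> all (fun y => y < k') (term_fv t).
Proof. case: t => //= y; rewrite andbT; lia. Qed.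

Lemma all_cons_lt k x s : x < k -> all (fun y => y < k) s -> all (fun y => y < k) (x :: s).
Proof. by move=> /= -> ->. Qed.

Ltac solve_all :=
  repeat match goal with
  | |- is_true (all _ (_ ++ _)) => rewrite all_cat; apply/andP; split
  | |- is_true (all _ (filter _ _)) => apply: all_filter_lt
  | |- is_true (all _ (term_fv _)) => (apply: tok_fv_le; [eassumption | lia])
  | |- is_true (all _ [::]) => done
  | |- is_true (all _ (if _ then _ else _)) => let H := fresh "H" in case: ifP => H; try (exfalso; lia)
  | |- is_true (all _ (_ :: _)) => apply: all_cons_lt; [lia | ]
  end.

Section Good.
Variable A : finType.
Variable C : lang A -> Prop.
Hypothesis hf : C (@lang_full A).

Definition good (L : lang A) (F : nat -> fterm -> fterm -> formula A) :=
  (forall k t1 t2, uses_only C (F k t1 t2)) /\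
  (forall k t1 t2, tok k t1 -> tok k t2 -> all (fun y => y < k) (fv (F k t1 t2))) /\
  sem L F.

Lemma SF_good L : SF C L -> exists F, good L F.
Proof.
elim=> {L} [L hL|a|L1 L2 _ [F1 [u1 [f1 s1]]] _ [F2 [u2 [f2 s2]]]|L _ [F [u [f s]]]
           |L1 L2 _ [F1 [u1 [f1 s1]]] _ [F2 [u2 [f2 s2]]]].
- exists (fun k t1 t2 => FInf L t1 t2); split; [by [] | split].
    by move=> k t1 t2 h1 h2 /=; solve_all.
  move=> k t1 t2 w e h1 h2 hij hj /=; tauto.
- exists (fun k t1 t2 => LetF a k t1 t2); split.
    by move=> k t1 t2 /=; tauto.
  split.
    by move=> k t1 t2 h1 h2 /=; solve_all.
  move=> k t1 t2 w e h1 h2 hij hj; rewrite sat_LetF //.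
- exists (fun k t1 t2 => FOr (F1 k t1 t2) (F2 k t1 t2)); split.
    by move=> k t1 t2 /=; split.
  split.
    by move=> k t1 t2 h1 h2 /=; rewrite all_cat f1 ?f2.
  move=> k t1 t2 w e h1 h2 hij hj /=; rewrite s1 // s2 //.
- exists (fun k t1 t2 => FNot (F k t1 t2)); split=> //; split=> //.
  move=> k t1 t2 w e h1 h2 hij hj /=; rewrite s //.
- exists (fun k t1 t2 => ConcF F1 F2 k t1 t2); split.
    move=> k t1 t2 /=; have := u1 k.+2 t1 (TVar k); have := u2 k.+2 (TVar k.+1) t2; tauto.
  split.
    move=> k t1 t2 h1 h2 /=; solve_all.
      apply: f1; [apply: (tok_mono h1); lia | rewrite /=; lia].
    apply: f2; [rewrite /=; lia | apply: (tok_mono h2); lia].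
  move=> k t1 t2 w e h1 h2 hij hj; exact: sat_ConcF.
Qed.

End Good.

Lemma SF_of_Rs (A : finType) (C : lang A -> Prop) (Rs : seq (seq (lang A))) :
  C (@lang_empty A) -> Al (fun R => size R = 1 /\ Al (SF C) R) Rs ->
  SF C (fun w => Ex (fun R => mrect R [:: w]) Rs).
Proof.
move=> he; elim: Rs => [|R Rs IH] /=.
  by move=> _; apply: (SF_ext _ (SF_base he)).
case: R => [|L0 [|L1 R]] /= [[hs hR] /IH h] //.
case: hR => hL0 _.
apply: (SF_ext _ (SF_union hL0 h)) => w; rewrite /lang_union; tauto.
Qed.

Theorem theorem6p5 (A : finType) (C : lang A -> Prop) :
  prevariety C -> forall L : lang A, SF C L <-> FO_IC C L.
Proof.
move=> hC L; split.
- move=> /(SF_good (hfull hC)) [F [hu [hfv hsem]]].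
  exists (F 0 TMin TMax); split; first exact: hu.
  split.
    have := hfv 0 TMin TMax isT isT; rewrite /sentence.
    by case: (fv _) => //= y s; rewrite ltn0.
  move=> w; rewrite (hsem 0 TMin TMax w (fun _ => 0)) //=.
  by rewrite /infix_word /= drop0 take_size.
- case=> phi [hu [_ hL]].
  have [Rs [a b]] := @main A C hC phi hu 0 (fun _ => 0) [::] erefl.
  have he : C (@lang_empty A) by case: hC => [_ [h _]].
  apply: (SF_ext _ (SF_of_Rs he a)) => w.
  rewrite hL; have := b [:: w] erefl; rewrite /env pos0 /= => ->; tauto.
Qed.
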